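(* Let $n\ge1$ and define automorphisms $a,b,c,d_1,\dots,d_n$ of the binary rooted tree $\mathcal{T}_2$ (vertex set the finite words over $\{0,1\}$) recursively by the wreath recursions $a=(0~1)(c,b)$, $b=(0~1)(b,c)$, $c=\sigma_0(d_1,d_1)$, $d_i=\sigma_i(d_{i+1},d_{i+1})$ for $1\le i\le n-1$, $d_n=\sigma_n(a,a)$, where $\sigma_1=(0~1)$ and $\sigma_i=\mathrm{id}$ for all $i\neq1$ (including $\sigma_0$). Then $a$ acts transitively on each level of $\mathcal{T}_2$ (i.e. on the set of words of length $m$, for every $m\ge0$).
   Context: The wreath recursion $f=\pi(f_0,f_1)$ (with $\pi\in S_2$ a permutation of $\{0,1\}$ and $f_0,f_1\in\mathrm{Aut}(\mathcal{T}_2)$) means $f(xw)=\pi(x)\,f_x(w)$ for $x\in\{0,1\}$ and words $w$. *)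

(* Defs.v *)
(* Vertices of T_2 = finite words over {0,1}, encoded as
   seq bool (false = 0, true = 1). *)
From mathcomp Require Import all_boot.
Set Implicit Arguments. Unset Strict Implicit. Unset Printing Implicit Defensive.

Inductive state := SA | SB | SC | SD of nat.

Definition sigma_flip (i : nat) : bool := i == 1.

(* Wreath recursion data for parameter n: (does the root permutation swap?,
   section at 0, section at 1). *)
Definition rule (n : nat) (s : state) : bool * state * state :=
  match s with
  | SA => (true, SC, SB)
  | SB => (true, SB, SC)
  | SC => (sigma_flip 0, SD 1, SD 1)
  | SD i => if i < n then (sigma_flip i, SD i.+1, SD i.+1)
            else (sigma_flip i, SA, SA)
  end.

Fixpoint act (n : nat) (s : state) (w : seq bool) : seq bool :=
  match w with
  | [::] => [::]
  | x :: w' =>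
      let: (p, s0, s1) := rule n s in
      (if p then ~~ x else x) :: act n (if x then s1 else s0) w'
  end.

(* Main.v *)
Require Import Defs.
From mathcomp Require Import all_boot.

Fixpoint actL (n : nat) (L : seq state) (w : seq bool) : seq bool :=
  match L with [::] => w | s :: L' => act n s (actL n L' w) end.

Fixpoint secL (n : nat) (L : seq state) (x : bool) : bool * seq state :=
  match L with
  | [::] => (x, [::])
  | s :: L' =>
      let: (y, M) := secL n L' x in
      let: (p, s0, s1) := rule n s in
      (if p then ~~ y else y, (if y then s1 else s0) :: M)
  end.

Fixpoint par (n k : nat) (s : state) : bool :=
  match k with
  | 0 => (rule n s).1.1
  | k'.+1 => par n k' (rule n s).1.2 (+) par n k' (rule n s).2
  end.

Definition parL n k (L : seq state) := foldr (fun s b => par n k s (+) b) false L.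

Lemma actL_cons n L x w :
  actL n L (x :: w) = (secL n L x).1 :: actL n (secL n L x).2 w.
Proof.
elim: L => [//|s L IH] /=; rewrite IH.
case: (secL n L x) => y M /=.
by case: (rule n s) => [[p s0] s1].
Qed.

Lemma secL1 n L x : (secL n L x).1 = parL n 0 L (+) x.
Proof.
elim: L => [//|s L IH] /=.
move: IH; case: (secL n L x) => y M /= ->.
by case: (rule n s) => [[p s0] s1] /=; case: p; case: (parL n 0 L); case: x.
Qed.

Lemma secL2 n L x : (secL n L x).2 =
  match L with [::] => [::] | s :: L' =>
   (if (parL n 0 L' (+) x) then (rule n s).2 else (rule n s).1.2) :: (secL n L' x).2 end.
Proof.
case: L => [//|s L] /=.
have := secL1 n L x.
case: (secL n L x) => y M /= ->.
by case: (rule n s) => [[p s0] s1] /=.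
Qed.

Lemma parL_cat n k A B : parL n k (A ++ B) = parL n k A (+) parL n k B.
Proof. by elim: A => [//|s A IH] /=; rewrite IH addbA. Qed.

Lemma parL_sec n k L :
  parL n k (secL n L false).2 (+) parL n k (secL n L true).2 = parL n k.+1 L.
Proof.
elim: L => [//|s L IH].
rewrite (secL2 n (s :: L) false) (secL2 n (s::L) true) /= -IH.
by case: (parL n 0 L) => /=; case: (par n k (rule n s).2); case: (par n k (rule n s).1.2);
  case: (parL n k (secL n L false).2); case: (parL n k (secL n L true).2).
Qed.

Lemma actL_cat n A B w : actL n (A ++ B) w = actL n A (actL n B w).
Proof. by elim: A => [//|s A IH] /=; rewrite IH. Qed.

Lemma size_act n s w : size (act n s w) = size w.
Proof.
elim: w s => [//|x w IH] s /=.
by case: (rule n s) => [[p s0] s1] /=; rewrite IH.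
Qed.

Lemma size_actL n L w : size (actL n L w) = size w.
Proof. by elim: L => [//|s L IH] /=; rewrite size_act IH. Qed.

Definition hx n L x := (secL n L (~~ x)).2 ++ (secL n L x).2.

Lemma actL_sq n L x w : parL n 0 L = true ->
  actL n L (actL n L (x :: w)) = x :: actL n (hx n L x) w.
Proof.
move=> H; rewrite !actL_cons !secL1 H /= actL_cat /hx.
by case: x.
Qed.

Lemma iter_double n L x w j : parL n 0 L = true ->
  iter j.*2 (actL n L) (x :: w) = x :: iter j (actL n (hx n L x)) w.
Proof.
move=> H; elim: j => [//|j IH].
by rewrite doubleS !iterS IH actL_sq.
Qed.

Lemma parL_hx n k L x : parL n k (hx n L x) = parL n k.+1 L.
Proof.
by rewrite /hx parL_cat -parL_sec; case: x => //=; rewrite addbC.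
Qed.

Lemma trans_main n m : forall L, (forall k, parL n k L = true) ->
  forall u v, size u = m -> size v = m -> exists j, iter j (actL n L) u = v.
Proof.
elim: m => [|m IH] L HL u v.
  by case: u => // _; case: v => // _; exists 0.
case: u => // x w; case: v => // y w' [Hw] [Hw'].
have H0 := HL 0.
have Hh : forall z, forall k, parL n k (hx n L z) = true.
  by move=> z k; rewrite parL_hx HL.
have same : forall z t, size t = m -> exists j, iter j (actL n L) (z :: t) = z :: w'.
  move=> z t Ht; have [j Hj] := IH _ (Hh z) t w' Ht Hw'.
  by exists j.*2; rewrite iter_double // Hj.
case: (eqVneq x y) => [<-|Hxy]; first exact: same.
have [j Hj] := same (~~ x) (actL n (secL n L x).2 w)
  (etrans (size_actL _ _ _) Hw).
exists j.+1; rewrite iterSr actL_cons secL1 H0 /=.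
by rewrite Hj; clear Hj; move: Hxy; case: x; case: y.
Qed.

Lemma par_SC n k : par n k SC = false.
Proof. by case: k => //= k; rewrite addbb. Qed.

Lemma par_SB n k : par n k SB = true.
Proof. by elim: k => //= k ->; rewrite par_SC. Qed.

Lemma par_SA n k : par n k SA = true.
Proof. by case: k => //= k; rewrite par_SC par_SB. Qed.

Theorem mainTheorem6 (n : nat) (hn : 1 <= n) (m : nat) (u v : seq bool) :
  size u = m -> size v = m -> exists k : nat, iter k (act n SA) u = v.
Proof.
move=> Hu Hv.
have HL : forall k, parL n k [:: SA] = true by move=> k; rewrite /= par_SA.
have [k Hk] := @trans_main n m [:: SA] HL u v Hu Hv; exists k; rewrite -Hk; exact: eq_iter.
Qed.
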